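(* Let $\mathcal V \subset B(H)$ be an operator system and $p \in \mathcal V$ be a projection. Set $q = I-p$. Then for every $n \in \mathbb{N}$ and $x \in M_n(\mathcal V)$ we have that $x \in C_n$ if and only if $\begin{pmatrix} x & x \\ x & x \end{pmatrix} \in C(p_n \oplus q_n)$.
   Context: Here $C_n = M_n(\mathcal V) \cap B(H^n)^+$ is the positive cone of $M_n(\mathcal V)$, $p_n = I_n \otimes p$, $q_n = I_n \otimes q$, and $C(p_n \oplus q_n) = \{ y \in M_{2n}(\mathcal V) : y = y^*, \ (p_n \oplus q_n) y (p_n \oplus q_n) \in B(H^{2n})^+\}$, where $M_{2n}(\mathcal V)$ is identified with $M_2(M_n(\mathcal V))$. *)

(* Defs.v *)
From HB Require Import structures.
From mathcomp Require Import all_boot all_order all_algebra.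
From mathcomp Require Import complex.
From mathcomp Require Import reals.
Set Implicit Arguments. Unset Strict Implicit. Unset Printing Implicit Defensive.
Import Order.TTheory GRing.Theory Num.Theory.
Local Open Scope ring_scope.

Section OpSys.
Variable R : realType.
Local Notation C := R[i].
Variable H : lmodType C.
Variable ip : H -> H -> C.   (* inner product <x, y>, linear in x *)

Definition is_inner_product : Prop :=
  [/\ (forall (a : C) (x y z : H), ip (a *: x + y) z = a * ip x z + ip y z),
      (forall x y : H, ip y x = (ip x y)^*),
      (forall x : H, 0 <= ip x x) &
      (forall x : H, ip x x = 0 -> x = 0)].

Definition hnorm (x : H) : R := Num.sqrt (complex.Re (ip x x)).

Definition hcomplete : Prop :=
  forall u : nat -> H,
    (forall e : R, 0 < e -> exists N : nat, forall m k : nat,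
        (N <= m)%N -> (N <= k)%N -> hnorm (u m - u k) < e) ->
    exists l : H, forall e : R, 0 < e -> exists N : nat, forall m : nat,
        (N <= m)%N -> hnorm (u m - l) < e.

Definition bounded_op (T : H -> H) : Prop :=
  (forall (a : C) (x y : H), T (a *: x + y) = a *: T x + T y) /\
  exists M : R, forall x : H, hnorm (T x) <= M * hnorm x.

Definition is_adjoint (T S : H -> H) : Prop :=
  forall x y : H, ip (T x) y = ip x (S y).

Definition operator_system (V : (H -> H) -> Prop) : Prop :=
  [/\ (forall T, V T -> bounded_op T),
      V id,
      (forall (a : C) (S T : H -> H), V S -> V T -> V (fun h => a *: S h + T h)) &
      (forall T, V T -> exists2 S, V S & is_adjoint T S)].

Definition projection (p : H -> H) : Prop :=
  (forall h, p (p h) = p h) /\ is_adjoint p p.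

(* operator matrices: elements of M_n(B(H)) acting on H^n *)
Definition opmx_apply (n : nat) (X : 'M[H -> H]_n) (xi : 'I_n -> H) : 'I_n -> H :=
  fun i => \sum_(j < n) X i j (xi j).

Definition opmx_mul (n : nat) (A B : 'M[H -> H]_n) : 'M[H -> H]_n :=
  \matrix_(i, j) (fun h => \sum_(k < n) A i k (B k j h)).

Definition ipn (n : nat) (xi eta : 'I_n -> H) : C := \sum_(i < n) ip (xi i) (eta i).

Definition opmx_pos (n : nat) (X : 'M[H -> H]_n) : Prop :=
  forall xi : 'I_n -> H, 0 <= ipn (opmx_apply X xi) xi.

Definition opmx_selfadj (n : nat) (X : 'M[H -> H]_n) : Prop :=
  forall i j, is_adjoint (X j i) (X i j).

Definition in_Mn (V : (H -> H) -> Prop) (n : nat) (X : 'M[H -> H]_n) : Prop :=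
  forall i j, V (X i j).

Definition Cn (V : (H -> H) -> Prop) (n : nat) (X : 'M[H -> H]_n) : Prop :=
  in_Mn V X /\ opmx_pos X.

(* a_n = I_n (x) a *)
Definition ampl (n : nat) (a : H -> H) : 'M[H -> H]_n :=
  \matrix_(i, j) (if i == j then a else (fun _ => 0)).

Definition zero_opmx (n : nat) : 'M[H -> H]_n := \matrix_(i, j) (fun _ => 0).

(* p_n (+) q_n in M_{2n}(B(H)) = M_2(M_n(B(H))) *)
Definition dsum_opmx (n : nat) (P Q : 'M[H -> H]_n) : 'M[H -> H]_(n + n) :=
  block_mx P (zero_opmx n) (zero_opmx n) Q.

Definition C_of (V : (H -> H) -> Prop) (m : nat) (P : 'M[H -> H]_m) (y : 'M[H -> H]_m) : Prop :=
  [/\ in_Mn V y, opmx_selfadj y & opmx_pos (opmx_mul P (opmx_mul y P))].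

End OpSys.

(* Main.v *)
Require Import Defs.
From HB Require Import structures.
From mathcomp Require Import all_boot all_order all_algebra.
From mathcomp Require Import complex.
From mathcomp Require Import reals.
From mathcomp Require Import ring.
From Stdlib Require Import FunctionalExtensionality.
Import Order.TTheory GRing.Theory Num.Theory.
Local Open Scope ring_scope.

Section Aux.
Set Implicit Arguments.
Variable R : realType.
Local Notation C := R[i].
Variable H : lmodType C.
Variable ip : H -> H -> C.
Hypothesis hip : is_inner_product ip.

Lemma ip0l z : ip 0 z = 0.
Proof.
case: hip => h1 _ _ _.
have e := h1 1 0 0 z; rewrite scaler0 addr0 mul1r in e.
by apply/(addrI (ip 0 z)); rewrite addr0 -e.
Qed.

Lemma ipDl x y z : ip (x + y) z = ip x z + ip y z.
Proof. by case: hip => h1 _ _ _; rewrite -{1}[x]scale1r h1 mul1r. Qed.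

Lemma ipZl a x z : ip (a *: x) z = a * ip x z.
Proof.
by case: hip => h1 _ _ _; rewrite -[a *: x]addr0 h1 ip0l addr0.
Qed.

Lemma ipc x y : ip y x = (ip x y)^*.
Proof. by case: hip. Qed.

Lemma ip0r z : ip z 0 = 0.
Proof. by rewrite ipc ip0l conjC0. Qed.

Lemma ipDr x y z : ip z (x + y) = ip z x + ip z y.
Proof. by rewrite ipc ipDl rmorphD /= -!ipc. Qed.

Lemma ipZr a x z : ip z (a *: x) = a^* * ip z x.
Proof. by rewrite ipc ipZl rmorphM /= -!ipc. Qed.

Lemma ipNl x z : ip (- x) z = - ip x z.
Proof. by rewrite -scaleN1r ipZl mulN1r. Qed.

Lemma ipNr x z : ip z (- x) = - ip z x.
Proof. by rewrite -scaleN1r ipZr conjCN1 mulN1r. Qed.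

Lemma ip_suml (I : finType) (f : I -> H) z :
  ip (\sum_i f i) z = \sum_i ip (f i) z.
Proof.
exact: (big_morph (fun u => ip u z) (fun u v => ipDl u v z) (ip0l z)).
Qed.

Definition lin (T : H -> H) := forall (a : C) x y, T (a *: x + y) = a *: T x + T y.

Lemma lin0 T : lin T -> T 0 = 0.
Proof.
move=> hT; have e := hT 1 0 0; rewrite scaler0 addr0 scale1r in e.
by apply/(addrI (T 0)); rewrite addr0 -e.
Qed.

Lemma linD T : lin T -> forall x y, T (x + y) = T x + T y.
Proof. by move=> hT x y; rewrite -{1}[x]scale1r hT scale1r. Qed.

Lemma linZ T : lin T -> forall a x, T (a *: x) = a *: T x.
Proof. by move=> hT a x; rewrite -[a *: x]addr0 hT lin0 // addr0. Qed.

Lemma lin_sum T (I : finType) (f : I -> H) : lin T ->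
  T (\sum_i f i) = \sum_i T (f i).
Proof. by move=> hT; rewrite (big_morph T (linD hT) (lin0 hT)). Qed.

Definition comb n (a : C) (xi eta : 'I_n -> H) := fun k => a *: xi k + eta k.
Definition B n (x : 'M[H -> H]_n) xi eta := ipn ip (opmx_apply x xi) eta.

Lemma B_linl n (x : 'M[H -> H]_n) a xi1 xi2 eta : (forall i j, lin (x i j)) ->
  B x (comb a xi1 xi2) eta = a * B x xi1 eta + B x xi2 eta.
Proof.
move=> hl; rewrite /B /ipn mulr_sumr -big_split /=; apply: eq_bigr => i _.
rewrite /opmx_apply /comb.
rewrite (eq_bigr (fun j => a *: x i j (xi1 j) + x i j (xi2 j))); last first.
  by move=> j _; rewrite hl.
by rewrite big_split /= -scaler_sumr ipDl ipZl.
Qed.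

Lemma ipn_combr n (w : 'I_n -> H) a e1 e2 :
  ipn ip w (comb a e1 e2) = a^* * ipn ip w e1 + ipn ip w e2.
Proof.
rewrite /ipn mulr_sumr -big_split /=; apply: eq_bigr => i _.
by rewrite /comb ipDr ipZr.
Qed.

Lemma B_linr n (x : 'M[H -> H]_n) a xi eta1 eta2 :
  B x xi (comb a eta1 eta2) = a^* * B x xi eta1 + B x xi eta2.
Proof. exact: ipn_combr. Qed.

Lemma polar n (x : 'M[H -> H]_n) a b : (forall i j, lin (x i j)) ->
  (forall xi, (B x xi xi)^* = B x xi xi) -> B x b a = (B x a b)^*.
Proof.
move=> hl hr.
have h1 := hr (comb 1 a b); have h2 := hr (comb 'i a b).
rewrite !(@B_linl n x _ _ _ _ hl) !B_linr in h1 h2.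

have ha := hr a; have hb := hr b.
set al := B x a a in h1 h2 ha; set be := B x b b in h1 h2 hb.
set z := B x a b in h1 h2 *; set w := B x b a in h1 h2 *.
rewrite !(rmorphD, rmorphM) /= !conjCK conjC1 conjCi ha hb !mul1r in h1 h2.
set Z := z^* in h1 h2 *; set W := w^* in h1 h2.
have key : 2%:R * 'i * (w - Z) =
  ((- 'i * ('i * al + Z) + ('i * W + be)) - ('i * (- 'i * al + z) + (- 'i * w + be)))
  - 'i * ((al + Z + (W + be)) - (al + z + (w + be))).
  ring.
rewrite h1 h2 !subrr mulr0 subr0 in key.
move/eqP: key; rewrite !mulf_eq0 pnatr_eq0 /= (negbTE (@neq0Ci _)) /= subr_eq0.
by move/eqP.
Qed.

Definition e n (j : 'I_n) (u : H) := fun k => if k == j then u else 0.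

Lemma apply_e n (x : 'M[H -> H]_n) j u k : (forall i j, lin (x i j)) ->
  opmx_apply x (e j u) k = x k j u.
Proof.
move=> hl; rewrite /opmx_apply (bigD1 j) //= /e eqxx big1 ?addr0 // => l /negbTE ->.
exact: lin0.
Qed.

Lemma ipn_e n (w : 'I_n -> H) i v : ipn ip w (e i v) = ip (w i) v.
Proof.
rewrite /ipn (bigD1 i) //= /e eqxx big1 ?addr0 // => k /negbTE ->; exact: ip0r.
Qed.

Lemma pos_selfadj n (x : 'M[H -> H]_n) : (forall i j, lin (x i j)) ->
  opmx_pos ip x -> opmx_selfadj ip x.
Proof.
move=> hl hp i j h k.
have E := @polar n x (e j k) (e i h) hl (fun xi => geC0_conj (hp xi)).
rewrite /B !ipn_e !apply_e // in E.
by rewrite E -ipc.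
Qed.

Lemma diag_sum m (D : 'M[H -> H]_m) (dd : 'I_m -> H -> H) i (f : 'I_m -> H) :
  (forall i k, D i k = if i == k then dd i else (fun _ => 0)) ->
  \sum_k D i k (f k) = dd i (f i).
Proof.
move=> hD; rewrite (bigD1 i) //= hD eqxx big1 ?addr0 // => k /negbTE.
by rewrite eq_sym hD => ->.
Qed.

Lemma pos_conj m (D : 'M[H -> H]_m) (dd : 'I_m -> H -> H) (y : 'M[H -> H]_m) xi :
  (forall i k, D i k = if i == k then dd i else (fun _ => 0)) ->
  (forall i, lin (dd i)) -> (forall i, is_adjoint ip (dd i) (dd i)) ->
  (forall i j, lin (y i j)) ->
  ipn ip (opmx_apply (opmx_mul D (opmx_mul y D)) xi) xi =
  ipn ip (opmx_apply y (fun j => dd j (xi j))) (fun j => dd j (xi j)).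
Proof.
move=> hD hdl hda hl; rewrite /ipn; apply: eq_bigr => i _.
rewrite -hda; congr (ip _ _).
rewrite /opmx_apply lin_sum //; apply: eq_bigr => j _.
rewrite mxE /= (@diag_sum m D dd _ _ hD) mxE /=; congr (dd i _).
rewrite (bigD1 j) //= hD eqxx big1 ?addr0 // => l /negbTE.
by rewrite hD => ->; exact: lin0.
Qed.

Lemma pos_block n (x : 'M[H -> H]_n) zeta : (forall i j, lin (x i j)) ->
  ipn ip (opmx_apply (block_mx x x x x) zeta) zeta =
  ipn ip (opmx_apply x (fun j => zeta (lshift n j) + zeta (rshift n j)))
         (fun j => zeta (lshift n j) + zeta (rshift n j)).
Proof.
move=> hl.
have hA : forall i, opmx_apply x (fun j => zeta (lshift n j) + zeta (rshift n j)) i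
   = \sum_j x i j (zeta (lshift n j)) + \sum_j x i j (zeta (rshift n j)).
  by move=> i; rewrite /opmx_apply -big_split; apply: eq_bigr => j _; rewrite linD.
rewrite /ipn big_split_ord /= -big_split /=; apply: eq_bigr => i _.
rewrite ipDr hA /opmx_apply !big_split_ord /=.
by congr (ip (_ + _) _ + ip (_ + _) _); apply: eq_bigr => j _;
  rewrite ?block_mxEul ?block_mxEur ?block_mxEdl ?block_mxEdr.
Qed.

End Aux.
Theorem theorem5p3 (R : realType) (H : lmodType R[i]) (ip : H -> H -> R[i])
  (hip : is_inner_product ip) (hcomp : hcomplete ip)
  (V : (H -> H) -> Prop) (hV : operator_system ip V)
  (p : H -> H) (hpV : V p) (hp : projection ip p)
  (n : nat) (x : 'M[H -> H]_n) (hx : in_Mn V x) :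
  let q : H -> H := fun h => h - p h in
  Cn ip V x <->
  C_of ip V (dsum_opmx (ampl n p) (ampl n q)) (block_mx x x x x).

Proof.
move=> q.
case: hV => hb _ _ _.
have linV : forall T, V T -> @lin R H T by move=> T /hb [].
have lp : @lin R H p := linV _ hpV.
have lq : @lin R H q by move=> a u v; rewrite /q lp scalerBr opprD addrACA.
have ap : is_adjoint ip p p := hp.2.
have aq : is_adjoint ip q q.
  by move=> h k; rewrite /q (ipDl hip) (ipNl hip) (ipDr hip) (ipNr hip) ap.
have hlx : forall i j, @lin R H (x i j) by move=> i j; exact: linV.
pose dd := fun i : 'I_(n + n) => if (i < n)%N then p else q.
have dl : forall j, dd (lshift n j) = p by move=> j; rewrite /dd /= ltn_ord.
have dr : forall j, dd (rshift n j) = q by move=> j; rewrite /dd /= ltnNge leq_addr.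
have hD : forall i k, dsum_opmx (ampl n p) (ampl n q) i k =
    if i == k then dd i else (fun _ => 0).
  move=> i k; rewrite -(splitK i) -(splitK k).
  case: (split i) => i'; case: (split k) => k';
    rewrite /dsum_opmx /= ?block_mxEul ?block_mxEur ?block_mxEdl ?block_mxEdr
      !mxE ?eq_shift ?dl ?dr //; by case: eqP.
have hdl : forall i, @lin R H (dd i) by move=> i; rewrite /dd; case: ifP.
have hda : forall i, is_adjoint ip (dd i) (dd i) by move=> i; rewrite /dd; case: ifP.
have hly : forall i j, @lin R H (block_mx x x x x i j).
  move=> i j; rewrite -(splitK i) -(splitK j).
  by case: (split i) => i'; case: (split j) => j';
    rewrite /= ?block_mxEul ?block_mxEur ?block_mxEdl ?block_mxEdr.
have key : forall xi, ipn ip (opmx_apply (opmx_mul (dsum_opmx (ampl n p) (ampl n q))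
      (opmx_mul (block_mx x x x x) (dsum_opmx (ampl n p) (ampl n q)))) xi) xi =
    ipn ip (opmx_apply x (fun j => p (xi (lshift n j)) + q (xi (rshift n j))))
      (fun j => p (xi (lshift n j)) + q (xi (rshift n j))).
  move=> xi; rewrite (pos_conj _ _ _ xi hD hdl hda hly) (pos_block hip x _ hlx).
  have -> : (fun j => dd (lshift n j) (xi (lshift n j)) + dd (rshift n j) (xi (rshift n j)))
     = (fun j => p (xi (lshift n j)) + q (xi (rshift n j))).
    by apply: functional_extensionality => j; rewrite dl dr.
  by [].
split.
- case=> _ hpos; split.
  + move=> i j; rewrite -(splitK i) -(splitK j).
    by case: (split i) => i'; case: (split j) => j';
      rewrite /= ?block_mxEul ?block_mxEur ?block_mxEdl ?block_mxEdr.
  + have sa := pos_selfadj hip hlx hpos.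
    move=> i j; rewrite -(splitK i) -(splitK j).
    by case: (split i) => i'; case: (split j) => j';
      rewrite /= ?block_mxEul ?block_mxEur ?block_mxEdl ?block_mxEdr.
  + by move=> xi; rewrite key.
- case=> _ _ hpos; split => // eta.
  have := hpos (fun i => match split i with inl j => eta j | inr j => eta j end).
  rewrite key.
  have -> : (fun j => p (match split (lshift n j) with inl j0 => eta j0 | inr j0 => eta j0 end) +
       q (match split (rshift n j) with inl j0 => eta j0 | inr j0 => eta j0 end)) = eta.
    apply: functional_extensionality => j.
    rewrite (unsplitK (inl j : 'I_n + 'I_n)) (unsplitK (inr j : 'I_n + 'I_n)).
    by rewrite /q addrC subrK.
  by [].
Qed.
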